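(* Let $d\geq 1$ and let $\sigma=(s_d,s_{d-1},\ldots,s_0)$ be any sequence of signs $s_j\in\{+,-\}$ with $s_d=+$. If $d$ is even and $s_0=+$ (resp. $s_0=-$), then there exists a real polynomial $P=\sum_{j=0}^d a_jx^j$ of degree $d$ with all $a_j\neq 0$ and $\operatorname{sgn} a_j=s_j$ for all $j$, which has exactly $0$ positive and $0$ negative roots (resp. exactly $1$ positive and $1$ negative root). If $d$ is odd and $s_0=+$ (resp. $s_0=-$), then there exists such a polynomial $P$ with sign pattern $\sigma$ having exactly $0$ positive and $1$ negative root (resp. exactly $1$ positive and $0$ negative roots).
   Context: A real polynomial $P=\sum_{j=0}^d a_jx^j$ of degree $d$ with all coefficients nonzero is said to define the sign pattern $\sigma=(s_d,\ldots,s_0)$ if $s_j=\operatorname{sgn}a_j$ for all $j$. A pair $(pos,neg)$ is realized for $\sigma$ by $P$ if $P$ defines $\sigma$ and has exactly $pos$ positive and exactly $neg$ negative real roots. *)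

(* Defs.v *)
From HB Require Import structures.
From mathcomp Require Import all_boot all_order all_algebra.
From mathcomp Require Import reals.
Set Implicit Arguments. Unset Strict Implicit. Unset Printing Implicit Defensive.
Import Order.TTheory GRing.Theory Num.Theory.
Local Open Scope ring_scope.

(* A sign pattern of length d+1: s j = true means "+", false means "-",
   for j = 0..d (s j is the sign of the coefficient of x^j). *)

Definition defines_sign_pattern (R : realType) (d : nat) (s : 'I_d.+1 -> bool)
    (P : {poly R}) : Prop :=
  size P = d.+1 /\
  forall j : 'I_d.+1, P`_j != 0 /\ (0 < P`_j) = s j.

Definition num_roots_in (R : realType) (A : R -> bool) (P : {poly R}) (n : nat)
    : Prop :=
  P != 0 /\
  exists rs : seq R, uniq rs /\
    (forall x : R, (x \in rs) <-> (A x /\ root P x)) /\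
    (\sum_(x <- rs) mup x P)%N = n.

Definition num_pos_roots (R : realType) (P : {poly R}) (n : nat) : Prop :=
  num_roots_in (fun x : R => 0 < x) P n.
Definition num_neg_roots (R : realType) (P : {poly R}) (n : nat) : Prop :=
  num_roots_in (fun x : R => x < 0) P n.

Definition realizes (R : realType) (d : nat) (s : 'I_d.+1 -> bool)
    (P : {poly R}) (pos neg : nat) : Prop :=
  defines_sign_pattern s P /\ num_pos_roots P pos /\ num_neg_roots P neg.

(* Main.v *)
Require Import Defs.
From HB Require Import structures.
From mathcomp Require Import all_boot all_order all_algebra.
From mathcomp Require Import reals.
From mathcomp Require Import polyrcf.
From mathcomp Require Import ring lra.
Import Order.TTheory GRing.Theory Num.Theory.
Local Open Scope ring_scope.

Lemma mup1 (R : realType) (p : {poly R}) (r : R) :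
  root p r -> p^`().[r] != 0 -> mup r p = 1%N.
Proof.
move=> hr hd.
have p0 : p != 0 by apply: contra hd => /eqP ->; rewrite deriv0 horner0.
apply/eqP; rewrite eqn_leq; apply/andP; split.
  rewrite mup_leq //; apply/negP => /dvdpP [q hq].
  by move: hd; rewrite hq !derivE !hornerE subrr /= !mulr0 add0r addrK mulr0 eqxx.
have h := XsubC_dvd r p0; rewrite dvdp_XsubCl hr in h; by rewrite -h.
Qed.

Lemma exp_mono {R : realType} {x : R} {m k : nat} :
  1 <= x -> (m <= k)%N -> x ^+ m <= x ^+ k.
Proof.
move=> hx hmk; rewrite -(subnKC hmk) exprD.
have h0 : 0 <= x ^+ m by apply: exprn_ge0; lra.
rewrite -{1}(mulr1 (x ^+ m)); apply: ler_wpM2l => //; exact: exprn_ege1.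
Qed.

Lemma pow_le {R : realType} {x : R} {m k : nat} :
  0 <= x -> (m <= k)%N -> x ^+ m <= 1 + x ^+ k.
Proof.
move=> hx hmk; case: (lerP x 1) => h.
  have := exprn_ile1 m hx h; have := exprn_ge0 k hx; lra.
have := exp_mono (ltW h) hmk; have : 0 <= 1 :> R by []; lra.
Qed.

Lemma shape (R : realType) (n : nat) (eps : R) (e : nat -> R) (c : R) (p : {poly R}) :
  0 <= eps -> eps * ((n.+1)%:R * 2 ^+ n.+2) <= 1 ->
  e n.+1 = 1 -> e 0%N = c -> (forall i, (0 < i)%N -> (i < n.+1)%N -> `|e i| <= eps) ->
  (forall x, 0 < x -> p.[x] = \sum_(i < n.+2) e i * x ^+ i) ->
  (forall x, 0 < x -> p^`().[x] = \sum_(i < n.+1) e i.+1 * i.+1%:R * x ^+ i) ->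
  (c = 1 -> forall x, 0 < x -> 0 < p.[x]) /\
  (c = -1 -> exists r, [/\ 0 < r, root p r, p^`().[r] != 0 &
                          forall x, 0 < x -> root p x -> x = r]).
Proof.
move=> he0 heps en e0 ebd hp hd.
set N : R := n%:R.
have N0 : 0 <= N by rewrite /N ler0n.
set K : R := 2 ^+ n.
have K1 : 1 <= K by apply: exprn_ege1; lra.
have h4 : (2:R) ^+ n.+2 = 4 * K by rewrite /K !exprS; ring.
have heps' : eps * ((N + 1) * (4 * K)) <= 1 by move: heps; rewrite -natr1 -/N h4.
have NeK : N * eps * K <= 1/4.
  have : 0 <= eps * K by apply: mulr_ge0; lra.
  nra.
have Ne : N * eps <= 1/4.
  have : N * eps * 1 <= N * eps * K by apply: ler_wpM2l => //; apply: mulr_ge0.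
  lra.
set T := fun x : R => \sum_(i < n) e i.+1 * x ^+ i.+1.
have hsplit : forall x, 0 < x -> p.[x] = c + T x + x ^+ n.+1.
  move=> x x0; rewrite hp // big_ord_recr big_ord_recl /= e0 en expr0 mulr1 mul1r.
  by [].
have Tb : forall x M, 0 < x -> (forall i, (i < n)%N -> x ^+ i.+1 <= M) ->
    `|T x| <= N * eps * M.
  move=> x M x0 hM; rewrite (le_trans (ler_norm_sum _ _ _)) //.
  have -> : N * eps * M = \sum_(i < n) (eps * M).
    by rewrite sumr_const card_ord -mulr_natl mulrA.
  apply: ler_sum => i _; rewrite normrM (ger0_norm (exprn_ge0 _ (ltW x0))).
  apply: ler_pM => //; first by apply: exprn_ge0; lra.
    by apply: ebd; rewrite ?ltnS ?ltn_ord.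
  exact: hM.
set U := fun x : R => \sum_(i < n) e i.+1 * i.+1%:R * x ^+ i.
have hdsplit : forall x, 0 < x -> p^`().[x] = U x + (N + 1) * x ^+ n.
  by move=> x x0; rewrite hd // big_ord_recr /= en mul1r -natr1.
have xk : forall x i, 1/2 <= x -> (i <= n)%N -> x ^+ i <= K * x ^+ n.
  move=> x i hx hi; rewrite /K -exprMn.
  have x0 : 0 <= x ^+ i by apply: exprn_ge0; lra.
  apply: (@le_trans _ _ ((2 * x) ^+ i)); last by apply: exp_mono => //; lra.
  rewrite exprMn -{1}(mul1r (x ^+ i)); apply: ler_wpM2r => //.
  by apply: exprn_ege1; lra.
have Ub : forall x, 1/2 <= x -> `|U x| <= N * eps * K * ((N + 1) * x ^+ n).
  move=> x hx; rewrite (le_trans (ler_norm_sum _ _ _)) //.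
  have -> : N * eps * K * ((N + 1) * x ^+ n) = \sum_(i < n) (eps * ((N + 1) * (K * x ^+ n))).
    by rewrite sumr_const card_ord -mulr_natl -/N; ring.
  apply: ler_sum => i _; rewrite !normrM normr_nat (ger0_norm (exprn_ge0 _ _)); last by lra.
  rewrite -mulrA.
  apply: ler_pM => //; first by apply: mulr_ge0; [rewrite ler0n | apply: exprn_ge0; lra].
    by apply: ebd; rewrite ?ltnS ?ltn_ord.
  apply: ler_pM => //.
  - by apply: exprn_ge0; lra.
  - by rewrite -natr1 -/N lerD2r ler_nat ltnW.
  - by apply: xk => //; apply: ltnW.
split.
  move=> c1 x x0; rewrite hsplit // c1.
  set y := x ^+ n.+1.
  have y0 : 0 <= y by apply: exprn_ge0; lra.
  have := Tb x (1 + y) x0 (fun i hi => @pow_le _ _ i.+1 n.+1 (ltW x0) (ltnW hi)).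
  have : N * eps * (1 + y) <= 1/4 * (1 + y) by apply: ler_wpM2r => //; lra.
  rewrite ler_norml; lra.
move=> c1.
have neg : forall x, 0 < x -> x <= 1/2 -> p.[x] < 0.
  move=> x x0 xh; rewrite hsplit // c1.
  have x1 : x <= 1 by lra.
  have := Tb x 1 x0 (fun i hi => exprn_ile1 i.+1 (ltW x0) x1).
  have : x ^+ n.+1 <= x.
    have h := exprn_ile1 n (ltW x0) x1; rewrite exprS; nra.
  rewrite ler_norml; lra.
have pos2 : 0 < p.[2].
  rewrite hsplit // c1.
  set y : R := 2 ^+ n.+1.
  have y2 : 2 <= y by apply: ler_eXnr => //; lra.
  have := Tb 2 (1 + y) (ltr0Sn _ 1) (fun i hi => @pow_le _ _ i.+1 n.+1 (ler0n _ 2) (ltnW hi)).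
  have : N * eps * (1 + y) <= 1/4 * (1 + y) by apply: ler_wpM2r => //; lra.
  rewrite ler_norml; lra.
have dpos : forall x, 1/2 <= x -> 0 < p^`().[x].
  move=> x hx; rewrite hdsplit; last lra.
  have z0 : 0 < (N + 1) * x ^+ n by apply: mulr_gt0; [lra | apply: exprn_gt0; lra].
  have := Ub x hx.
  have : N * eps * K * ((N + 1) * x ^+ n) <= 1/4 * ((N + 1) * x ^+ n).
    by apply: ler_wpM2r => //; lra.
  rewrite ler_norml; lra.
have [r /andP [r1 r2] rr] : exists2 r, 1/2 <= r <= 2 & root p r.
  apply: poly_ivt; first lra.
  apply/andP; split; last lra.
  have : 0 < 1/2 :> R by lra.
  move/neg => h; have := h (lexx _); lra.
exists r; split => //; first lra.
  by have := dpos r r1; lra.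
move=> x x0 rx.
have x1 : 1/2 < x.
  rewrite ltNge; apply/negP => xh; have := neg x x0 xh.
  by rewrite (rootP rx) ltxx.
apply: (derp_inj (a:=1/2) (b:=x+r)).
- by move=> y; rewrite in_itv /= => /andP [h1 _]; apply: dpos; lra.
- by rewrite in_itv /=; apply/andP; split; lra.
- by rewrite in_itv /=; apply/andP; split; lra.
by rewrite (rootP rx) (rootP rr).
Qed.

Theorem mainTheorem1 (R : realType) (d : nat) (s : 'I_d.+1 -> bool) :
  (1 <= d)%N -> s ord_max = true ->
  exists P : {poly R},
    if ~~ odd d then
      (if s ord0 then realizes s P 0 0 else realizes s P 1 1)
    else
      (if s ord0 then realizes s P 0 1 else realizes s P 1 0).
Proof.
case: d s => [|n] s // _ smax.
pose sg := fun b : bool => if b then 1 else -1 : R.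
have sgN : forall b, `|sg b| = 1 by case => /=; rewrite ?normrN normr1.
have sg0 : forall b, sg b != 0 by case => /=; rewrite ?oppr_eq0 oner_eq0.
have sgP : forall b, (0 < sg b) = b by case => /=; rewrite ?oppr_gt0 ?ltr01 // ltr10.
pose eps : R := ((n.+1)%:R * 2 ^+ n.+2)^-1.
have D0 : 0 < (n.+1)%:R * 2 ^+ n.+2 :> R.
  by apply: mulr_gt0; [rewrite ltr0Sn | apply: exprn_gt0; lra].
have eps0 : 0 < eps by rewrite invr_gt0.
have heps : eps * ((n.+1)%:R * 2 ^+ n.+2) <= 1 by rewrite mulVf // gt_eqF.
pose a := fun i : nat => if (i == 0%N) || (i == n.+1) then sg (s (inord i))
                          else eps * sg (s (inord i)).
pose P : {poly R} := \poly_(i < n.+2) a i.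
have an : a n.+1 = 1.
  rewrite /a eqxx orbT.
  have -> : inord n.+1 = ord_max :> 'I_n.+2 by apply: val_inj; rewrite /= inordK.
  by rewrite smax.
have a0 : a 0%N = sg (s ord0).
  rewrite /a eqxx /=.
  by have -> : inord 0 = ord0 :> 'I_n.+2 by apply: val_inj; rewrite /= inordK.
have abd : forall i, (0 < i)%N -> (i < n.+1)%N -> `|a i| <= eps.
  move=> i i0 iN; rewrite /a; case: ifP => [/orP [/eqP hi|/eqP hi] | _].
  - by rewrite hi in i0.
  - by rewrite hi ltnn in iN.
  by rewrite normrM sgN mulr1 gtr0_norm.
have sizeP : size P = n.+2 by rewrite size_poly_eq // an oner_eq0.
have P0 : P != 0 by rewrite -size_poly_eq0 sizeP.
have SP : defines_sign_pattern s P.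
  split => // j; rewrite coef_poly ltn_ord /a inord_val.
  case: ifP => _; first by rewrite sg0 sgP.
  by rewrite mulf_neq0 ?sg0 ?gt_eqF // pmulr_rgt0 // sgP.
have hP : forall x, P.[x] = \sum_(i < n.+2) a i * x ^+ i by move=> x; rewrite horner_poly.
have hdP : forall x, P^`().[x] = \sum_(i < n.+1) a i.+1 * i.+1%:R * x ^+ i.
  move=> x; rewrite (horner_coef_wide (n:=n.+1)); last by have := lt_size_deriv P0; rewrite sizeP.
  by apply: eq_bigr => i _; rewrite coef_deriv coef_poly ltnS ltn_ord mulr_natr.
have [posA posB] := @shape _ _ _ _ _ _ (ltW eps0) heps an a0 abd (fun x _ => hP x) (fun x _ => hdP x).
pose Q : {poly R} := (-1) ^+ n.+1 *: (P \Po - 'X).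
pose e' := fun i : nat => (-1) ^+ n.+1 * (-1) ^+ i * a i.
have hQ : forall x, Q.[x] = (-1) ^+ n.+1 * P.[- x].
  by move=> x; rewrite hornerZ horner_comp hornerN hornerX.
have hdQ : forall x, Q^`().[x] = (-1) ^+ n.+1 * (P^`().[- x] * -1).
  move=> x; rewrite derivZ deriv_comp derivN derivX hornerZ hornerM horner_comp.
  by rewrite !hornerE.
have en' : e' n.+1 = 1.
  by rewrite /e' an mulr1 -exprD -signr_odd addnn odd_double expr0.
have e0' : e' 0%N = (-1) ^+ n.+1 * sg (s ord0) by rewrite /e' expr0 mulr1 a0.
have ebd' : forall i, (0 < i)%N -> (i < n.+1)%N -> `|e' i| <= eps.
  move=> i i0 iN; rewrite /e' !normrM !normrX normrN normr1 !expr1n !mul1r.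
  exact: abd.
have hQs : forall x, 0 < x -> Q.[x] = \sum_(i < n.+2) e' i * x ^+ i.
  move=> x _; rewrite hQ hP mulr_sumr; apply: eq_bigr => i _.
  rewrite (exprNn x) /e'; ring.
have hdQs : forall x, 0 < x -> Q^`().[x] = \sum_(i < n.+1) e' i.+1 * i.+1%:R * x ^+ i.
  move=> x _; rewrite hdQ hdP mulr_suml mulr_sumr; apply: eq_bigr => i _.
  rewrite (exprNn x) /e' (exprS (-1 : R) i); ring.
have [negA negB] := @shape _ _ _ _ _ _ (ltW eps0) heps en' e0' ebd' hQs hdQs.
have NP0 : s ord0 -> num_pos_roots P 0.
  move=> h0; split => //; exists [::]; split => //; split; last by rewrite big_nil.
  move=> x; split => //; move=> [x0 /rootP rx].
  by have := posA ltac:(by rewrite h0) x x0; rewrite rx ltxx.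
have NP1 : s ord0 = false -> num_pos_roots P 1.
  move=> h0; have [r [r0 rr dr ru]] := posB ltac:(by rewrite h0).
  split => //; exists [:: r]; split => //; split; last by rewrite big_seq1 mup1.
  move=> x; rewrite inE; split; first by move/eqP => ->.
  by move=> [x0 rx]; apply/eqP; apply: ru.
have rootQ : forall x, root Q (- x) = root P x.
  by move=> x; rewrite /root hQ opprK mulf_eq0 signr_eq0.
have NN0 : (-1) ^+ n.+1 * sg (s ord0) = 1 -> num_neg_roots P 0.
  move=> h0; split => //; exists [::]; split => //; split; last by rewrite big_nil.
  move=> x; split => //; move=> [x0 rx]; rewrite -rootQ in rx.
  have := negA h0 (- x); rewrite oppr_gt0 => /(_ x0).
  by rewrite (rootP rx) ltxx.
have NN1 : (-1) ^+ n.+1 * sg (s ord0) = -1 -> num_neg_roots P 1.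
  move=> h0; have [r [r0 rr dr ru]] := negB h0.
  split => //; exists [:: - r]; split => //; split.
    move=> x; rewrite inE; split.
      move/eqP => ->; split; first by rewrite oppr_lt0.
      by rewrite -rootQ opprK.
    move=> [x0 rx]; apply/eqP; rewrite -rootQ in rx.
    by rewrite -(ru (- x)) ?opprK // oppr_gt0.
  rewrite big_seq1 mup1 //; first by rewrite -rootQ opprK.
  by move: dr; rewrite hdQ mulf_eq0 signr_eq0 /= mulf_eq0 oppr_eq0 oner_eq0 orbF.
exists P; rewrite /realizes /=.
case h0 : (s ord0); case hn : (odd n) => /=.
- split => //; split; first exact: NP0.
  by apply: NN0; rewrite h0 -signr_odd /= hn /= ?expr0 ?expr1 ?mulrNN ?mulr1 ?mul1r.
- split => //; split; first exact: NP0.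
  by apply: NN1; rewrite h0 -signr_odd /= hn /= ?expr0 ?expr1 ?mulrNN ?mulr1 ?mul1r.
- split => //; split; first exact: NP1.
  by apply: NN1; rewrite h0 -signr_odd /= hn /= ?expr0 ?expr1 ?mulrNN ?mulr1 ?mul1r.
- split => //; split; first exact: NP1.
  by apply: NN0; rewrite h0 -signr_odd /= hn /= ?expr0 ?expr1 ?mulrNN ?mulr1 ?mul1r.
Qed.
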